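(* Let $n\ge27$, $\mathcal{X},\mathcal{Y}$ finite with $|\mathcal{X}|,|\mathcal{Y}|\ge2$, $\mathbf{X}$ a random vector on $\mathcal{X}^n$ and $\mathbf{Y}|\mathbf{X}\sim p^n_{Y|X}$. Let $U$ be a discrete random variable with $U,\mathbf{X},\mathbf{Y}$ a Markov chain in that order, let $u$ be in the support of $U$, and let $\mathcal{A}_u$ be the support of $\mathbf{X}$ given $U=u$. If $\log_2 g^n_{Y|X}(\mathcal{A}_u,1-\beta)\le c$ for some $c>0$ and $\beta\in(0,1)$, then $$\Pr\left(h_{\mathbf{Y}|U}(\mathbf{Y}|U)\le\mu+c\,\middle|\,U=u\right)\ge 1-2^{-\mu}-\beta$$ for each $\mu>0$.
   Context: $h_{\mathbf{Y}|U}(\mathbf{y}|u)=-\log_2 p_{\mathbf{Y}|U}(\mathbf{y}|u)$. For $\eta\in(0,1)$ and $\mathcal{A}\subseteq\mathcal{X}^n$, a set $\mathcal{B}\subseteq\mathcal{Y}^n$ is an $\eta$-image of $\mathcal{A}$ by $p_{Y|X}$ if $p^n_{Y|X}(\mathcal{B}|\mathbf{x})\ge\eta$ for all $\mathbf{x}\in\mathcal{A}$; $g^n_{Y|X}(\mathcal{A},\eta)$ is the minimum cardinality of such a set. *)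

(* Defs.v *)
From HB Require Import structures.
From mathcomp Require Import all_boot all_order all_algebra.
From mathcomp Require Import all_classical all_reals all_analysis.
Set Implicit Arguments. Unset Strict Implicit. Unset Printing Implicit Defensive.
Import Order.TTheory GRing.Theory Num.Theory.
Local Open Scope ring_scope.

Section Defs.
Variable R : realType.

Definition log2 (x : R) : R := ln x / ln 2.

(* a discrete memoryless channel p_{Y|X} : W x y = p_{Y|X}(y|x) *)
Definition is_channel (X Y : finType) (W : X -> Y -> R) :=
  (forall x y, 0 <= W x y) /\ (forall x, \sum_(y : Y) W x y = 1).

Definition chan_n (X Y : finType) (W : X -> Y -> R) (n : nat)
  (x : {ffun 'I_n -> X}) (y : {ffun 'I_n -> Y}) : R :=
  \prod_(i < n) W (x i) (y i).

Definition chan_n_set (X Y : finType) (W : X -> Y -> R) (n : nat)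
  (B : {set {ffun 'I_n -> Y}}) (x : {ffun 'I_n -> X}) : R :=
  \sum_(y in B) chan_n W x y.

Definition is_eta_image (X Y : finType) (W : X -> Y -> R) (n : nat)
  (A : {set {ffun 'I_n -> X}}) (eta : R) (B : {set {ffun 'I_n -> Y}}) : bool :=
  [forall x in A, eta <= chan_n_set W B x].

(* g^n_{Y|X}(A, eta): minimum cardinality of an eta-image of A.
   (The full set is an eta-image whenever W is a channel and eta <= 1, so the
   default value #|Y^n| of the min does not matter in that case.) *)
Definition g_img (X Y : finType) (W : X -> Y -> R) (n : nat)
  (A : {set {ffun 'I_n -> X}}) (eta : R) : nat :=
  \big[minn/#|{: {ffun 'I_n -> Y}}|]_(B : {set {ffun 'I_n -> Y}} | is_eta_image W A eta B) #|B|.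

(* Joint pmf P u x y = Pr(U = u, X = x, Y = y) *)
Definition PU (U : Type) (X Y : finType) (n : nat)
  (P : U -> {ffun 'I_n -> X} -> {ffun 'I_n -> Y} -> R) (u : U) : R :=
  \sum_(x : {ffun 'I_n -> X}) \sum_(y : {ffun 'I_n -> Y}) P u x y.

Definition PUX (U : Type) (X Y : finType) (n : nat)
  (P : U -> {ffun 'I_n -> X} -> {ffun 'I_n -> Y} -> R) (u : U) x : R :=
  \sum_(y : {ffun 'I_n -> Y}) P u x y.

Definition PYgU (U : Type) (X Y : finType) (n : nat)
  (P : U -> {ffun 'I_n -> X} -> {ffun 'I_n -> Y} -> R) (u : U) y : R :=
  (\sum_(x : {ffun 'I_n -> X}) P u x y) / PU P u.

Definition hYgU (U : Type) (X Y : finType) (n : nat)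
  (P : U -> {ffun 'I_n -> X} -> {ffun 'I_n -> Y} -> R) (u : U) y : R :=
  - log2 (PYgU P u y).

Definition supp_XgU (U : Type) (X Y : finType) (n : nat)
  (P : U -> {ffun 'I_n -> X} -> {ffun 'I_n -> Y} -> R) (u : U)
  : {set {ffun 'I_n -> X}} :=
  [set x | 0 < PUX P u x / PU P u].

End Defs.

(* Main.v *)
Require Import Defs.
From HB Require Import structures.
From mathcomp Require Import all_boot all_order all_algebra.
From mathcomp Require Import all_classical all_reals all_analysis.
From mathcomp Require Import lra.
Import Order.TTheory GRing.Theory Num.Theory.
Local Open Scope ring_scope.

Theorem lemma25 (R : realType) (n : nat) (X Y : finType) (U : choiceType)
  (W : X -> Y -> R)
  (P : U -> {ffun 'I_n -> X} -> {ffun 'I_n -> Y} -> R)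
  (u : U) (c beta : R) :
  (27 <= n)%N -> (2 <= #|X|)%N -> (2 <= #|Y|)%N ->
  is_channel W ->
  (* P is a joint pmf of (U, X, Y) with U discrete *)
  (forall u' x y, 0 <= P u' x y) ->
  (\esum_(u' in [set: U]) (PU P u')%:E = 1)%E ->
  (* Y | X ~ p^n_{Y|X} and U - X - Y is a Markov chain:
     Pr(U=u',X=x,Y=y) = Pr(U=u',X=x) p^n_{Y|X}(y|x) *)
  (forall u' x y, P u' x y = PUX P u' x * chan_n W x y) ->
  0 < PU P u ->
  0 < c -> 0 < beta < 1 ->
  log2 (g_img W (supp_XgU P u) (1 - beta))%:R <= c ->
  forall mu : R, 0 < mu ->
    1 - powR 2 (- mu) - beta <=
    \sum_(y : {ffun 'I_n -> Y} | hYgU P u y <= mu + c) PYgU P u y.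
Proof.
move=> _ _ _ _ P0 _ HM PUpos c0 /andP[b0 b1] Hg mu mu0.
set q := PYgU P u.
set S := (fun y => hYgU P u y <= mu + c).
have q0 : forall y, 0 <= q y.
  move=> y; rewrite /q /PYgU; apply: divr_ge0; last exact: ltW.
  by apply: sumr_ge0 => x _.
have q1 : \sum_y q y = 1.
  rewrite /q /PYgU -mulr_suml exchange_big /= -/(PU P u).
  by rewrite mulfV // gt_eqF.
have [B [HB cardB]] : exists B : {set {ffun 'I_n -> Y}},
    (is_eta_image W (supp_XgU P u) (1 - beta) B \/ B = [set: {ffun 'I_n -> Y}]%SET) /\
    #|B| = g_img W (supp_XgU P u) (1 - beta).
  rewrite /g_img; apply: (big_ind (fun v => exists B : {set {ffun 'I_n -> Y}},
    (is_eta_image W (supp_XgU P u) (1 - beta) B \/ B = [set: {ffun 'I_n -> Y}]%SET) /\ #|B| = v)).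
  - by exists [set: {ffun 'I_n -> Y}]%SET; split; [right | rewrite cardsT].
  - move=> a b [Ba [HBa ca]] [Bb [HBb cb]].
    case: (leqP a b) => hab.
    + by exists Ba; split => //; rewrite ca; apply/esym/minn_idPl.
    + by exists Bb; split => //; rewrite cb; apply/esym/minn_idPr/ltnW.
  - by move=> B HB; exists B; split => //; left.
have qB : 1 - beta <= \sum_(y in B) q y.
  case: HB => [HB|->]; last first.
    rewrite (eq_bigl predT) ?q1; first by lra.
    by move=> y; rewrite inE.
  have -> : \sum_(y in B) q y =
      \sum_x (PUX P u x / PU P u) * chan_n_set W B x.
    rewrite /q /PYgU -mulr_suml exchange_big /= mulr_suml.
    apply: eq_bigr => x _; rewrite /chan_n_set big_distrr /= mulr_suml.
    apply: eq_bigr => y _; rewrite HM; lra.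
  have sp : \sum_x (PUX P u x / PU P u) = 1.
    rewrite -mulr_suml /PUX -/(PU P u) mulfV // gt_eqF //.
  apply: (le_trans (y := \sum_x (PUX P u x / PU P u) * (1 - beta))).
    by rewrite -mulr_suml sp mul1r.
  apply: ler_sum => x _.
  have px0 : 0 <= PUX P u x / PU P u.
    by apply: divr_ge0; [apply: sumr_ge0 | exact: ltW].
  case: (boolP (x \in supp_XgU P u)) => hx.
    apply: (ler_wpM2l px0).
    by move/forallP: HB => /(_ x) /implyP /(_ hx).
  have -> : PUX P u x / PU P u = 0.
    apply/eqP; rewrite eq_le px0 andbT leNgt; apply/negP => h; move: hx.
    by rewrite inE h.
  by rewrite !mul0r.
set t := ln (2 : R).
have t0 : 0 < t by rewrite /t ln_gt0 // ltr1n.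
set bnd := expR (- (mu + c) * t).
have cardbnd : #|B|%:R * bnd <= expR (- mu * t).
  case: (posnP #|B|) => [->|hB]; first by rewrite mul0r expR_ge0.
  have gle : (#|B|%:R : R) <= expR (c * t).
    have gpos : (0 : R) < #|B|%:R by rewrite ltr0n.
    rewrite -(lnK (x := #|B|%:R)) ?posrE // ler_expR.
    move: Hg; rewrite /log2 -cardB ler_pdivrMr //.
  apply: (le_trans (y := expR (c * t) * bnd)).
    by apply: ler_wpM2r => //; exact: expR_ge0.
  by rewrite /bnd -expRD; rewrite le_eqVlt; apply/orP; left; apply/eqP; congr expR; lra.
have pt : forall y, ~~ S y -> q y <= bnd.
  move=> y; rewrite /S /hYgU -/q /log2 -/t -ltNge => hy.
  case: (ltP 0 (q y)) => qp; last by apply: (le_trans qp); exact: expR_ge0.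
  rewrite -(lnK (x := q y)) ?posrE // /bnd ler_expR.
  move: hy; rewrite ltrNr ltr_pdivrMr //; lra.
have split1 : \sum_(y | ~~ S y) q y <=
    \sum_(y | y \notin B) q y + \sum_(y in B) bnd.
  rewrite big_mkcond [X in _ <= X + _]big_mkcond [X in _ <= _ + X]big_mkcond.
  rewrite -big_split /=; apply: ler_sum => y _.
  case: (boolP (S y)) => hS /=; case: (boolP (y \in B)) => hB /=;
    rewrite ?add0r ?addr0 ?expR_ge0 ?q0 //.
  exact: pt.
have notB : \sum_(y | y \notin B) q y = 1 - \sum_(y in B) q y.
  have := q1; rewrite (bigID (fun y => y \in B)) /= => e.
  by move: e => <-; rewrite addrAC subrr add0r.
have powE : powR 2 (- mu) = expR (- mu * t).
  by rewrite /t mulrC expRM lnK // posrE.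
have tot : \sum_(y | S y) q y + \sum_(y | ~~ S y) q y = 1.
  by rewrite -q1 [RHS](bigID S) /= addrC.
rewrite powE.
move: split1; rewrite notB sumr_const -/(#|B|%:R) => h.
have : #|B|%:R * bnd = bnd *+ #|B| by rewrite mulr_natl.
lra.
Qed.
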